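(* (i) For all positive integers $t$ and $d$ with $1\le d\le t$, setting $s=1+d/t$, \[ g(s,t)=1-\frac{d^2+d}{(t+d)(2d+1)}=\frac{t}{t+d}+\frac{d^2}{(t+d)(2d+1)}=\frac{s+1+1/d}{(2+1/d)s}. \] (ii) For every rational number $s$ with $1<s\le 2$, $g(s)=\frac{s+1}{2s}$. (iii) For every positive integer $t$, $g(2,t)=\frac{3t+1}{4t+2}$.
   Context: Let $\mathbb{F}$ be a finite field and $x_1,\dots,x_p$ a basis of $\mathbb{F}^p$. A $[t\times m,p]$ array code is a $t\times m$ array whose entries (cells) are linear combinations of $x_1,\dots,x_p$; its columns are called servers. It has the $k$-PIR property (is a $[t\times m,p]$ $k$-PIR array code) if for every $i\in\{1,\dots,p\}$ there exist $k$ pairwise disjoint sets $S_1,\dots,S_k$ of columns such that for every $j$ the vector $x_i$ lies in the linear span of all entries of the columns in $S_j$. Its PIR rate is $k/m$. For a rational $s>1$ and a positive integer $t$ with $st$ an integer, $g(s,t)$ is the largest PIR rate $k/m$ of a $[t\times m,st]$ $k$-PIR array code (over all finite fields, all $m$ and all $k$), and $g(s)=\limsup_{t\to\infty} g(s,t)$, with $t$ ranging over positive integers such that $st$ is an integer. *)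

(* Defs.v *)
From HB Require Import structures.
From mathcomp Require Import all_boot all_order all_algebra all_field.
From mathcomp Require Import boolp classical_sets reals.
Set Implicit Arguments. Unset Strict Implicit. Unset Printing Implicit Defensive.
Import Order.TTheory GRing.Theory Num.Theory.
Local Open Scope ring_scope.
Local Open Scope classical_set_scope.

(* A [t x m, p] array code over the finite field F: cell (r, c) holds a
   linear combination of x_1..x_p, encoded by its coefficient row vector
   in F^p (x_i is the i-th standard basis vector delta_mx 0 i). *)
Definition array_code (F : finFieldType) (t m p : nat) :=
  'I_t -> 'I_m -> 'rV[F]_p.

Definition in_span_cols (F : finFieldType) (t m p : nat)
    (C : array_code F t m p) (S : {set 'I_m}) (i : 'I_p) : Prop :=
  exists a : 'I_t -> 'I_m -> F,
    \sum_(r < t) \sum_(c in S) a r c *: C r c = delta_mx 0 i.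

Definition is_kPIR (F : finFieldType) (t m p : nat)
    (C : array_code F t m p) (k : nat) : Prop :=
  forall i : 'I_p, exists S : 'I_k -> {set 'I_m},
    (forall j j' : 'I_k, j != j' -> S j :&: S j' == finset.set0) /\
    (forall j : 'I_k, in_span_cols C (S j) i).

Definition PIR_rates (R : realType) (t p : nat) : set R :=
  [set r | exists (F : finFieldType) (m k : nat) (C : array_code F t m p),
     (0 < m)%N /\ is_kPIR C k /\ r = k%:R / m%:R].

Arguments PIR_rates R t p : clear implicits.

(* Rates of [t x m, st] k-PIR array codes; empty unless st is an integer. *)
Definition rates_st (R : realType) (s : rat) (t : nat) : set R :=
  [set r | exists p : nat, p%:Q = s * t%:Q /\ PIR_rates R t p r].

Arguments rates_st R s t : clear implicits.

Definition g_st (R : realType) (s : rat) (t : nat) : R := sup (rates_st R s t).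

Arguments g_st R s t : clear implicits.

(* g(s) = limsup_{t -> oo} g(s,t), t ranging over positive integers with
   st an integer:  inf_N sup { g(s,t) | t >= N, t > 0, st integer }. *)
Definition g_s (R : realType) (s : rat) : R :=
  inf [set u | exists N : nat,
        u = sup [set v | exists t : nat,
                   [/\ (N <= t)%N, (0 < t)%N,
                       (exists p : nat, p%:Q = s * t%:Q) & v = g_st R s t]]].
Arguments g_s R s : clear implicits.

(* Main.v *)
Require Import Defs.
From HB Require Import structures.
From mathcomp Require Import all_boot all_order all_algebra all_field.
From mathcomp Require Import boolp classical_sets reals.
From mathcomp Require Import zify ring lra.
Set Implicit Arguments. Unset Strict Implicit. Unset Printing Implicit Defensive.
Import Order.TTheory GRing.Theory Num.Theory.
Local Open Scope ring_scope.
Section Transfer.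
Variables (F : finFieldType) (X : finType) (t p : nat) (Cx : 'I_t -> X -> 'rV[F]_p).

Definition spanX (S : {set X}) (v : 'rV[F]_p) :=
  exists a : 'I_t -> X -> F, \sum_(r < t) \sum_(x in S) a r x *: Cx r x = v.

Lemma spanX0 (S : {set X}) : spanX S 0.
Proof. exists (fun _ _ => 0); apply: big1 => r _; apply: big1 => x _; exact: scale0r. Qed.

Lemma spanXD (S : {set X}) u v : spanX S u -> spanX S v -> spanX S (u + v).
Proof.
move=> [a <-] [b <-]; exists (fun r x => a r x + b r x).
rewrite -big_split /=; apply: eq_bigr => r _; rewrite -big_split /=.
by apply: eq_bigr => x _; rewrite scalerDl.
Qed.

Lemma spanXZ (S : {set X}) c v : spanX S v -> spanX S (c *: v).
Proof.
move=> [a <-]; exists (fun r x => c * a r x).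
rewrite scaler_sumr; apply: eq_bigr => r _; rewrite scaler_sumr.
by apply: eq_bigr => x _; rewrite scalerA.
Qed.

Lemma spanXN (S : {set X}) v : spanX S v -> spanX S (- v).
Proof. move=> h; rewrite -scaleN1r; exact: spanXZ. Qed.

Lemma spanX_cell (S : {set X}) r x : x \in S -> spanX S (Cx r x).
Proof.
move=> xS; exists (fun r' x' => ((r' == r) && (x' == x))%:R).
rewrite (bigD1 r) //= [X in _ + X]big1 => [|r' nr]; last first.
  by apply: big1 => x' _; rewrite (negbTE nr) /= scale0r.
rewrite addr0 (bigD1 x) //= !eqxx scale1r big1 ?addr0 // => x' /andP [_ /negbTE ->].
by rewrite andbF scale0r.
Qed.

Lemma spanX_sum (S : {set X}) (I : finType) (P : pred I) (v : I -> 'rV[F]_p) :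
  (forall i, P i -> spanX S (v i)) -> spanX S (\sum_(i | P i) v i).
Proof.
move=> h; apply: (big_ind (spanX S)) => //; [exact: spanX0 | exact: spanXD].
Qed.

Lemma transfer k :
  (forall i : 'I_p, exists (R : X -> {set X}) (Tk : {set X}),
     [/\ #|Tk| = k,
         (forall x y, x \in Tk -> y \in Tk -> x != y -> R x :&: R y = finset.set0) &
         (forall x, x \in Tk -> spanX (R x) (delta_mx 0 i))]) ->
  is_kPIR (fun r (c : 'I_#|X|) => Cx r (enum_val c)) k.
Proof.
move=> h i; have [R [Tk [cT disj sp]]] := h i.
pose g (j : 'I_k) : X := enum_val (cast_ord (esym cT) j).
have ginj : injective g.
  move=> j j' /enum_val_inj /(congr1 val) /= e; exact: val_inj.
have gT j : g j \in Tk by exact: enum_valP.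
exists (fun j => [set c : 'I_#|X| | enum_val c \in R (g j)]); split.
  move=> j j' jj; apply/eqP/setP => c; rewrite !inE.
  have : R (g j) :&: R (g j') = finset.set0.
    apply: disj => //; apply: contra jj => /eqP /ginj ->; by [].
  by move/setP/(_ (enum_val c)); rewrite !inE.
move=> j; have [a ha] := sp _ (gT j).
exists (fun r c => a r (enum_val c)); rewrite -ha; apply: eq_bigr => r _.
rewrite (reindex (@enum_val X predT)) /=.
  by apply: eq_bigl => c; rewrite inE.
by exists (@enum_rank X) => x _; [exact: enum_valK | exact: enum_rankK].
Qed.
End Transfer.
Section Constr.
Variables (t d : nat).
Hypotheses (d1 : (0 < d)%N) (dt : (d <= t)%N).
Local Notation p := (t + d)%N.

Notation TT := ({set 'I_p} * {set 'I_p})%type.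
Definition good (x : TT) :=
  [&& #|x.1| == (2 * d)%N, x.2 \subset x.1 & (#|x.2| == d) || (#|x.2| == d.+1)].
Notation XX := {x : TT | good x}.
Definition UU (x : XX) := (val x).1.
Definition WW (x : XX) := (val x).2.
Definition isB (x : XX) := #|WW x| == d.+1.

Lemma goodP (x : XX) : [/\ #|UU x| = (2 * d)%N, WW x \subset UU x &
   (#|WW x| = if isB x then d.+1 else d)].
Proof.
case: x => [[U W] h]; have /and3P [/eqP cU sWU cW] := h; rewrite /UU /WW /isB /=.
split => //; case/orP: cW => /eqP ->; rewrite ?eqxx //.
by rewrite (_ : (d == d.+1) = false) //; apply/negbTE; rewrite neq_ltn ltnSn.
Qed.


Variable F : finFieldType.
Definition dl (j : 'I_p) : 'rV[F]_p := delta_mx 0 j.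
Definition uW (x : XX) : 'rV[F]_p := \sum_(j in WW x) dl j.
Definition Lx (x : XX) : seq 'rV[F]_p :=
  [seq dl j | j <- enum (~: WW x)] ++ (if isB x then [:: uW x] else [::]).
Definition Cx (r : 'I_t) (x : XX) : 'rV[F]_p := nth 0 (Lx x) r.

Lemma size_Lx x : size (Lx x) = t.
Proof.
have [_ _ cW] := goodP x.
rewrite /Lx size_cat size_map -cardE.
have := cardsC (WW x); rewrite card_ord cW.
case: (isB x) => /= h; move: h; set c := #|~: WW x|; lia.
Qed.

Lemma cell_span (S : {set XX}) x v : x \in S -> v \in Lx x -> spanX Cx S v.
Proof.
move=> xS vL.
have hi : (index v (Lx x) < t)%N by have := index_mem v (Lx x); rewrite vL size_Lx.
have := spanX_cell Cx (Ordinal hi) xS.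
by rewrite /Cx /= nth_index.
Qed.


Definition pt (i : 'I_p) (x : XX) : XX := insubd x (UU x, UU x :\: (WW x :\ i)).

Lemma card_pt i x : i \in WW x ->
  #|UU x :\: (WW x :\ i)| = if isB x then d else d.+1.
Proof.
move=> iW; have [cU sWU cW] := goodP x.
rewrite cardsD (finset.setIidPr _); last by apply: (fintype.subset_trans _ sWU); apply: subsetDl.
have := cardsD1 i (WW x); rewrite iW cU cW.
case: (isB x); set c := #|WW x :\ i|; lia.
Qed.

Lemma pt_good i x : i \in WW x -> good (UU x, UU x :\: (WW x :\ i)).
Proof.
move=> iW; have [cU sWU cW] := goodP x.
apply/and3P; split => /=; first by rewrite cU.
  exact: subsetDl.
by rewrite card_pt //; case: (isB x); rewrite eqxx ?orbT.
Qed.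

Lemma pt_val i x : i \in WW x -> val (pt i x) = (UU x, UU x :\: (WW x :\ i)).
Proof. by move=> iW; rewrite /pt insubdK //; apply: pt_good. Qed.

Lemma pt_W i x : i \in WW x -> WW (pt i x) = UU x :\: (WW x :\ i).
Proof. by move=> iW; rewrite /WW pt_val. Qed.

Lemma pt_U i x : i \in WW x -> UU (pt i x) = UU x.
Proof. by move=> iW; rewrite /UU pt_val. Qed.

Lemma pt_in i x : i \in WW x -> i \in WW (pt i x).
Proof.
move=> iW; have [_ sWU _] := goodP x.
rewrite pt_W // !inE eqxx /=; exact: (fintype.subsetP sWU).
Qed.

Lemma pt_isB i x : i \in WW x -> isB (pt i x) = ~~ isB x.
Proof.
move=> iW; rewrite {1}/isB pt_W // card_pt //.
case: (isB x) => /=; first by rewrite (_ : (d == d.+1) = false) //; apply/negbTE; rewrite neq_ltn ltnSn.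
by rewrite eqxx.
Qed.

Lemma XX_eq (x y : XX) : UU x = UU y -> WW x = WW y -> x = y.
Proof.
move=> eU eW; apply: val_inj.
by rewrite [val x]surjective_pairing [val y]surjective_pairing -/(UU x) -/(WW x) eU eW.
Qed.

Lemma pt_inj i x y : i \in WW x -> i \in WW y -> pt i x = pt i y -> x = y.
Proof.
move=> ix iy e.
have eU : UU x = UU y by rewrite -(pt_U ix) -(pt_U iy) e.
have eW' : UU x :\: (WW x :\ i) = UU y :\: (WW y :\ i) by rewrite -(pt_W ix) -(pt_W iy) e.
apply: XX_eq => //; apply/setP => j.
have [_ sx _] := goodP x; have [_ sy _] := goodP y.
case: (eqVneq j i) => [-> | ji]; first by rewrite ix iy.
have := congr1 (fun A : {set 'I_p} => j \in A) eW'; rewrite /= !inE ji /= eU.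
case jU: (j \in UU y) => /=.
  by rewrite !andbT => /(congr1 negb); rewrite !negbK.
move=> _.
have jx : j \notin WW x by apply: (contraFN _ jU) => jx; rewrite -eU (fintype.subsetP sx).
have jy : j \notin WW y by apply: (contraFN _ jU) => jy; rewrite (fintype.subsetP sy).
by rewrite (negbTE jx) (negbTE jy).
Qed.


Lemma dl_Lx x j : j \notin WW x -> dl j \in Lx x.
Proof. move=> jW; rewrite mem_cat; apply/orP; left; apply: map_f; by rewrite mem_enum inE. Qed.

Lemma uW_Lx x : isB x -> uW x \in Lx x.
Proof. move=> bx; rewrite mem_cat bx; apply/orP; right; exact: mem_head. Qed.

Definition Tk (i : 'I_p) := [set x : XX | ~~ (isB x && (i \in WW x))].
Definition Rc (i : 'I_p) (x : XX) : {set XX} := if i \in WW x then [set x; pt i x] else [set x].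

Lemma rec_span i x : x \in Tk i -> spanX Cx (Rc i x) (dl i).
Proof.
rewrite inE /Rc => hx; case: ifP => iW.
  have bx : isB x = false by move: hx; rewrite iW andbT => /negbTE.
  set y := pt i x.
  have iy : i \in WW y by apply: pt_in.
  have by' : isB y by rewrite /y pt_isB // bx.
  have -> : dl i = uW y - \sum_(j in WW y | j != i) dl j.
    by rewrite /uW (bigD1 i) //= addrK.
  apply: spanXD.
    apply: (cell_span (x := y)); first by rewrite !inE eqxx orbT.
    exact: uW_Lx.
  apply: spanXN; apply: spanX_sum => j /andP [jy ji].
  apply: (cell_span (x := x)); first by rewrite !inE eqxx.
  apply: dl_Lx; move: jy; rewrite /y pt_W // !inE ji /=.
  by case/andP.
apply: (cell_span (x := x)); first by rewrite inE.
by apply: dl_Lx; rewrite iW.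
Qed.

Lemma ntk i w : w \in Tk i -> i \in WW w -> pt i w \notin Tk i.
Proof.
move=> hw iw; have bw : isB w = false by move: hw; rewrite inE iw andbT => /negbTE.
by rewrite inE negbK pt_in // andbT pt_isB // bw.
Qed.

Lemma in_Rc i x z : (z \in Rc i x) = (z == x) || ((i \in WW x) && (z == pt i x)).
Proof. by rewrite /Rc; case: ifP => _; rewrite !inE ?orbF. Qed.

Lemma rec_disj i x y : x \in Tk i -> y \in Tk i -> x != y ->
  Rc i x :&: Rc i y = finset.set0.
Proof.
move=> hx hy xy; apply/setP => z; rewrite inE [z \in finset.set0]inE !in_Rc.
apply/negP => /andP [hzx hzy].
case/orP: hzx => [/eqP zx | /andP [ix /eqP zx]]; subst z.
  case/orP: hzy => [/eqP e | /andP [iy /eqP e]]; first by move/eqP: xy.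
  by move: (ntk hy iy); rewrite -e hx.
case/orP: hzy => [/eqP e | /andP [iy /eqP e]].
  by move: (ntk hx ix); rewrite e hy.
by move/eqP: xy; apply; apply: (pt_inj ix iy).
Qed.

Definition KB (i : 'I_p) := #|[set x : XX | isB x && (i \in WW x)]|.
Definition KA (i : 'I_p) := #|[set x : XX | ~~ isB x && (i \in WW x)]|.

Lemma card_Tk i : #|Tk i| = (#|{: XX}| - KB i)%N.
Proof.
have -> : Tk i = ~: [set x : XX | isB x && (i \in WW x)] by apply/setP => x; rewrite !inE.
have := cardsC [set x : XX | isB x && (i \in WW x)]; rewrite /KB; set a := #|_|; set b := #|_|.
move=> <-; by rewrite addKn.
Qed.

Lemma KA_KB i : KA i = KB i.
Proof.
apply/eqP; rewrite eqn_leq; apply/andP; split.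
  rewrite /KA -(@card_in_imset _ _ (pt i)).
    apply: subset_leq_card; apply/fintype.subsetP => z /imsetP [x]; rewrite inE => /andP [bx ix] ->.
    by rewrite inE pt_isB // bx pt_in.
  move=> x y; rewrite !inE => /andP [_ ix] /andP [_ iy]; exact: pt_inj.
rewrite /KB -(@card_in_imset _ _ (pt i)).
  apply: subset_leq_card; apply/fintype.subsetP => z /imsetP [x]; rewrite inE => /andP [bx ix] ->.
  by rewrite inE pt_isB // bx pt_in.
move=> x y; rewrite !inE => /andP [_ ix] /andP [_ iy]; exact: pt_inj.
Qed.

Definition sw (i i' j : 'I_p) := if j == i then i' else if j == i' then i else j.

Lemma swK i i' : involutive (sw i i').
Proof.
move=> j; rewrite /sw.
case: (eqVneq j i) => [->|ji]; first by rewrite eqxx; case: (eqVneq i' i) => [->|]; rewrite ?eqxx.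
case: (eqVneq j i') => [->|ji']; first by rewrite eqxx.
by rewrite (negbTE ji) (negbTE ji').
Qed.

Lemma sw_inj i i' : injective (sw i i').
Proof. exact: inv_inj (swK i i'). Qed.

Lemma swsw i i' (A : {set 'I_p}) : sw i i' @: (sw i i' @: A) = A.
Proof.
rewrite -imset_comp (eq_imset _ (swK i i')); exact: imset_id.
Qed.

Lemma sw_good i i' (x : XX) : good (sw i i' @: UU x, sw i i' @: WW x).
Proof.
have [cU sWU cW] := goodP x.
apply/and3P; split => /=.
- by rewrite card_imset ?cU //; exact: sw_inj.
- exact: imsetS.
- by rewrite card_imset ?cW; [case: (isB x); rewrite eqxx ?orbT | exact: sw_inj].
Qed.

Definition psi i i' (x : XX) : XX := insubd x (sw i i' @: UU x, sw i i' @: WW x).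

Lemma psi_val i i' x : val (psi i i' x) = (sw i i' @: UU x, sw i i' @: WW x).
Proof. by rewrite /psi insubdK //; apply: sw_good. Qed.

Lemma psi_U i i' x : UU (psi i i' x) = sw i i' @: UU x.
Proof. by rewrite /UU psi_val. Qed.
Lemma psi_W i i' x : WW (psi i i' x) = sw i i' @: WW x.
Proof. by rewrite /WW psi_val. Qed.

Lemma psiK i i' : involutive (psi i i').
Proof.
move=> x; apply: XX_eq; rewrite ?psi_U ?psi_W; exact: swsw.
Qed.

Lemma KB_le i i' : (KB i <= KB i')%N.
Proof.
rewrite /KB -(@card_imset _ _ (psi i i')); last exact: inv_inj (psiK i i').
apply: subset_leq_card; apply/fintype.subsetP => z /imsetP [x]; rewrite inE => /andP [bx ix] ->.
have [_ _ cW] := goodP x.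
rewrite inE /isB {1}/WW psi_val /= card_imset; last exact: sw_inj.
rewrite -/(WW x) cW bx eqxx /=.
rewrite /WW psi_val /=; apply/imsetP; exists i => //.
by rewrite /sw eqxx.
Qed.

Lemma KB_const i i' : KB i = KB i'.
Proof. by apply/eqP; rewrite eqn_leq !KB_le. Qed.

Lemma double_count (P : pred XX) :
  (\sum_(i < p) #|[set x : XX | P x && (i \in WW x)]| = \sum_(x | P x) #|WW x|)%N.
Proof.
rewrite (eq_bigr (fun i => (\sum_(x : XX) ((P x && (i \in WW x)) : nat))%N)); last first.
  move=> i _; rewrite -sum1_card big_mkcond /=; apply: eq_bigr => x _.
  by rewrite finset.in_set; case: (_ && _).
rewrite exchange_big /= [RHS]big_mkcond /=; apply: eq_bigr => x _.
case: (P x) => /=; last by apply: big1.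
rewrite -sum1_card [RHS]big_mkcond /=; apply: eq_bigr => i _; by case: (i \in WW x).
Qed.

Lemma card_ltn n : (n <= p)%N -> #|[set j : 'I_p | (j < n)%N]| = n.
Proof.
move=> hn.
have -> : [set j : 'I_p | (j < n)%N] = widen_ord hn @: [set: 'I_n].
  apply/setP => j; rewrite inE; apply/idP/imsetP => [jn|[k _ ->]] /=; last exact: ltn_ord.
  by exists (Ordinal jn); rewrite ?inE //; apply: val_inj.
rewrite card_imset ?cardsT ?card_ord //.
by move=> a b /(congr1 val) /= /val_inj.
Qed.

Lemma XX_nonempty : (0 < #|{: XX}|)%N.
Proof.
have h2 : (2 * d <= p)%N by lia.
have h1 : (d <= p)%N by lia.
have g : good ([set j : 'I_p | (j < 2 * d)%N], [set j : 'I_p | (j < d)%N]).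
  apply/and3P; split => /=.
  - by rewrite card_ltn.
  - apply/fintype.subsetP => j; rewrite !inE => jd; lia.
  - by rewrite card_ltn // eqxx.
apply/card_gt0P; by exists (exist (fun x : TT => good x) _ g).
Qed.

End Constr.

Notation XXt t d := ({x : {set 'I_(t + d)} * {set 'I_(t+d)} | @good t d x}).

Lemma construct t d : (0 < d)%N -> (d <= t)%N ->
  exists (m k : nat) (C : array_code 'F_2 t m (t + d)),
    [/\ (0 < m)%N, is_kPIR C k & (k * (2*d).+1 * (t + d) = m * (t * (2*d).+1 + d^2))%N].
Proof.
move=> d1 dt.
have p0 : (0 < t + d)%N by lia.
set i0 : 'I_(t + d) := Ordinal p0.
set K := KB i0.
set m := #|{: XXt t d}|.
exists m, (m - K)%N, (fun r (c : 'I_m) => @Cx t d 'F_2 r (enum_val c)).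
have hK (i : 'I_(t + d)) : KB i = K by exact: (KB_const i i0).
split.
- exact: XX_nonempty.
- apply: transfer => i.
  exists (Rc i), (Tk i); split.
  + by rewrite card_Tk hK.
  + by move=> x y; apply: rec_disj.
  + by move=> x; apply: rec_span.
- have eB : (\sum_(i < t + d) KB i = (t + d) * K)%N.
    by rewrite (eq_bigr (fun _ => K)) // sum_nat_const card_ord.
  have eB2 := double_count (fun x : XXt t d => isB x).
  have eA2 := double_count (fun x : XXt t d => ~~ isB x).
  rewrite (eq_bigr (fun _ => d.+1)) in eB2; last first.
    by move=> x bx; have [_ _ ->] := goodP x; rewrite bx.
  rewrite (eq_bigr (fun _ => d)) in eA2; last first.
    by move=> x bx; have [_ _ ->] := goodP x; rewrite (negbTE bx).
  rewrite !sum_nat_const in eB2 eA2.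
  have eA : (\sum_(i < t + d) KA i = (t + d) * K)%N.
    by rewrite -eB; apply: eq_bigr => i _; rewrite KA_KB.
  rewrite /KB in eB; rewrite /KA in eA.
  rewrite eB2 in eB; rewrite eA2 in eA.
  have hab := cardC (fun x : XXt t d => isB x).
  have Km : (K <= m)%N.
    rewrite /K /KB /m; apply: leq_trans (max_card _) _; by [].
  move: eA eB hab Km.
  set a := #|_|; set b := #|_|; set c := #|_|.
  have -> : c = m by [].
  move=> ha hb hc Km.
  have h : (m * (d * d.+1) = (t + d) * K * (2 * d).+1)%N.
    rewrite -hc; nia.
  have e1 : ((m - K) * (2 * d).+1 * (t + d) + K * (2 * d).+1 * (t + d) = m * (2 * d).+1 * (t + d))%N.
    by rewrite -!mulnDl subnK.
  nia.
Qed.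
Lemma sum_delta (F : fieldType) p (a : 'I_p) (g : 'I_p -> F) :
  \sum_j (j == a)%:R * g j = g a.
Proof.
rewrite (bigD1 a) //= eqxx mul1r big1 ?addr0 // => j /negbTE ->; by rewrite mul0r.
Qed.

Lemma rank_biorth (F : fieldType) (I : finType) p q (M : 'M[F]_(q, p))
  (e : I -> 'rV[F]_p) (f : I -> 'I_p -> F) :
  (forall k, (e k <= M)%MS) ->
  (forall k l, \sum_j e k 0 j * f l j = (k == l)%:R) ->
  (#|I| <= \rank M)%N.
Proof.
move=> eM ef.
pose E := \matrix_(k < #|I|) e (enum_val k).
pose Fm := \matrix_(j < p, l < #|I|) f (enum_val l) j.
have EF : E *m Fm = 1%:M.
  apply/matrixP => k l; rewrite !mxE.
  under eq_bigr do rewrite !mxE.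
  by rewrite ef (inj_eq enum_val_inj).
have := mxrankM_maxl E Fm; rewrite EF mxrank1 => h.
apply: (leq_trans h); apply: mxrankS; apply/row_subP => k.
by rewrite rowK.
Qed.
Section UB.
Variables (F : finFieldType) (t m p d : nat) (C : array_code F t m p).

Definition Mc c : 'M[F]_(t, p) := \matrix_(r < t) C r c.
Definition inB c (i : 'I_p) := (delta_mx (0 : 'I_1) i <= Mc c)%MS.
Definition typeA c := [forall r, forall j, (C r c 0 j != 0) ==> inB c j].
Definition wt c i : nat := if inB c i then (2 * d).+1 else if typeA c then d else d.+1.

Lemma sum_coord (I : finType) (A : {set I}) (E : I -> 'rV[F]_p) j :
  (\sum_(k in A) E k) 0 j = \sum_(k in A) E k 0 j.
Proof. exact: summxE. Qed.

Lemma cell_sub r c : (C r c <= Mc c)%MS.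
Proof. have := row_sub r (Mc c); by rewrite rowK. Qed.

Lemma span_sub (S : {set 'I_m}) c0 (a : 'I_t -> 'I_m -> F) :
  S \subset [set c0] ->
  ((\sum_(r < t) \sum_(c in S) a r c *: C r c)%R <= Mc c0)%MS.
Proof.
move=> sS; apply: summx_sub => r _; apply: summx_sub => c cS.
have := fintype.subsetP sS c cS; rewrite inE => /eqP ->; apply: scalemx_sub; exact: cell_sub.
Qed.

Lemma rec_weight S i : in_span_cols C S i -> ((2 * d).+1 <= \sum_(c in S) wt c i)%N.
Proof.
move=> [a ha].
case: (boolP [exists c in S, inB c i]) => [/existsP [c /andP [cS ci]]|nB].
  rewrite (bigD1 c) //= /wt ci; exact: leq_addr.
have nB' : forall c, c \in S -> ~~ inB c i.
  by move=> c cS; apply/negP => ci; move/existsP: nB; apply; exists c; rewrite cS.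
case: (boolP [forall c in S, typeA c]) => [/forall_inP allA|].
  exfalso.
  have := congr1 (fun M : 'M[F]_(1,p) => M 0 i) ha.
  rewrite mxE eqxx /= summxE big1 => [|r _].
    by rewrite eqxx /= => /eqP; rewrite eq_sym oner_eq0.
  rewrite sum_coord big1 // => c cS; rewrite mxE.
  have := allA c cS => /forallP /(_ r) /forallP /(_ i).
  rewrite (negbTE (nB' c cS)) implybF negbK => /eqP ->; by rewrite mulr0.
move=> /forall_inPn [c0 c0S nA].
have c0w : wt c0 i = d.+1 by rewrite /wt (negbTE (nB' c0 c0S)) (negbTE nA).
case: (boolP (S \subset [set c0])) => sS.
  exfalso; move/negP: (nB' c0 c0S); apply; rewrite /inB -ha; exact: span_sub.
have [c1 c1S c1n] : exists2 c1, c1 \in S & c1 != c0.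
  move/subsetPn: sS => [c1 c1S]; rewrite inE => h; by exists c1.
rewrite (bigD1 c0) //= (bigD1 c1) /=; last by rewrite c1S.
rewrite c0w addnA; apply: leq_trans (leq_addr _ _).
rewrite /wt (negbTE (nB' c1 c1S)); case: typeA; lia.
Qed.

End UB.
Section UB2.
Variables (F : finFieldType) (t m p d : nat) (C : array_code F t m p).

Lemma sum_delta' (a : 'I_p) (g : 'I_p -> F) :
  \sum_j g j * (j == a)%:R = g a.
Proof. rewrite -(sum_delta a g); apply: eq_bigr => j _; exact: mulrC. Qed.

Lemma sum_if (P : pred 'I_p) (a x : nat) :
  (\sum_i (if P i then a else x) = #|[set i | P i]| * a + (p - #|[set i | P i]|) * x)%N.
Proof.
rewrite (bigID P) /=.
have -> : (\sum_(i | P i) (if P i then a else x) = \sum_(i | P i) a)%N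
  by apply: eq_bigr => i ->.
have -> : (\sum_(i | ~~ P i) (if P i then a else x) = \sum_(i | ~~ P i) x)%N
  by apply: eq_bigr => i /negbTE ->.
rewrite !sum_nat_const; congr (_ * _ + _ * _)%N.
  by apply: eq_card => i; rewrite inE.
transitivity #|~: [set i | P i]|; first by apply: eq_card => i; rewrite !inE.
have h := cardsC [set i | P i]; rewrite card_ord in h.
apply: (@addnI #|[set i | P i]|); rewrite h subnKC //; have := max_card (mem [set i | P i]); by rewrite card_ord.
Qed.

Definition BB c := [set i | inB C c i].

Lemma delta_coord (a j : 'I_p) : (delta_mx (0:'I_1) a : 'rV[F]_p) 0 j = (j == a)%:R.
Proof. by rewrite mxE eqxx. Qed.

Lemma rankB c : (#|BB c| <= \rank (Mc C c))%N.
Proof.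
rewrite -[#|BB c|]card_ord.
apply: (rank_biorth (e := fun k => delta_mx 0 (enum_val k))
                    (f := fun l j => (j == enum_val l)%:R)).
  move=> k; have := enum_valP k; by rewrite inE.
move=> k l; under eq_bigr do rewrite delta_coord.
by rewrite (sum_delta (enum_val k) (fun j => (j == enum_val l)%:R)) (inj_eq enum_val_inj).
Qed.

Lemma rankB' c : ~~ typeA C c -> (#|BB c|.+1 <= \rank (Mc C c))%N.
Proof.
move=> /forallPn [r /forallPn [j0]]; rewrite negb_imply => /andP [nz nB].
set x := C r c 0 j0.
pose v : 'rV[F]_p := C r c - \sum_(j in BB c) C r c 0 j *: delta_mx 0 j.
have vE j : v 0 j = if j \in BB c then 0 else C r c 0 j.
  rewrite /v !mxE sum_coord.
  under eq_bigr do rewrite mxE delta_coord.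
  case: ifP => jB.
    rewrite (bigD1 j) //= eqxx mulr1 big1 ?addr0 ?subrr // => j' /andP [_ /negbTE].
    by rewrite eq_sym => ->; rewrite mulr0.
  rewrite big1 ?subr0 // => j' j'B; have : j != j' by apply: contraFN jB => /eqP ->.
  by move/negbTE => ->; rewrite mulr0.
have j0B : j0 \notin BB c by rewrite inE.
have vj0 : v 0 j0 = x by rewrite vE (negbTE j0B).
rewrite -[#|BB c|]card_ord -card_option.
apply: (rank_biorth
  (e := fun k => if k is Some k' then delta_mx 0 (enum_val k') else v)
  (f := fun l j => if l is Some l' then (j == enum_val l')%:R else (j == j0)%:R / x)).
  case=> [k|].
    have := enum_valP k; by rewrite inE.
  rewrite /v; apply: addmx_sub.
    exact: cell_sub.
  rewrite -scaleN1r; apply: scalemx_sub; apply: summx_sub => j jB.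
  by apply: scalemx_sub; move: jB; rewrite inE.
case=> [k|]; case=> [l|].
- under eq_bigr do rewrite delta_coord.
  by rewrite (sum_delta (enum_val k) (fun j => (j == enum_val l)%:R)) (inj_eq enum_val_inj).
- under eq_bigr do rewrite delta_coord.
  rewrite (sum_delta (enum_val k) (fun j => (j == j0)%:R / x)).
  have kB : enum_val k \in BB c := enum_valP k.
  have -> : (enum_val k == j0) = false by apply: contraNF j0B => /eqP <-.
  by rewrite mul0r.
- rewrite sum_delta' vE.
  by have -> : enum_val l \in BB c := enum_valP l.
- under eq_bigr do rewrite mulrCA.
  by rewrite (sum_delta j0 (fun j => v 0 j / x)) vj0 mulfV.
Qed.
End UB2.
Section UB3.
Variables (F : finFieldType) (t m d : nat) (C : array_code F t m (t + d)).

Lemma col_weight c : (\sum_i wt d C c i <= t * (2*d).+1 + d^2)%N.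
Proof.
have r1 := rankB C c; have r2 := rank_leq_row (Mc C c).
rewrite /wt; case: (boolP (typeA C c)) => hA.
  rewrite (sum_if (inB C c)) -/(BB C c); set b := #|BB C c|.
  have : (b <= t)%N by apply: leq_trans r2.
  nia.
rewrite (sum_if (inB C c)) -/(BB C c); set b := #|BB C c|.
have r3 := rankB' hA.
have : (b < t)%N by apply: leq_trans r2.
nia.
Qed.

Lemma per_i k i : is_kPIR C k -> (k * (2*d).+1 <= \sum_c wt d C c i)%N.
Proof.
move=> /(_ i) [S [disj sp]].
have h1 : (k * (2*d).+1 <= \sum_(j < k) \sum_(c in S j) wt d C c i)%N.
  rewrite -[k in (k * _)%N]card_ord -sum_nat_const.
  by apply: leq_sum => j _; apply: rec_weight.
apply: leq_trans h1 _.
rewrite (eq_bigr (fun j => \sum_c (if c \in S j then wt d C c i else 0))); last first.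
  by move=> j _; rewrite big_mkcond.
rewrite exchange_big /=; apply: leq_sum => c _.
rewrite (eq_bigr (fun j => (c \in S j) * wt d C c i)%N); last by move=> j _; case: (c \in S j); rewrite ?mul1n ?mul0n.
rewrite -big_distrl /=.
have -> : (\sum_(j < k) (c \in S j) = #|[pred j | c \in S j]|)%N.
  rewrite -sum1_card [RHS]big_mkcond; apply: eq_bigr => j _ /=; rewrite inE; by case: (c \in S j).
have : (#|[pred j | c \in S j]| <= 1)%N.
  apply/card_le1_eqP => j j' /= cj cj'; apply/eqP; apply/negPn/negP => jj.
  have := disj j' j jj; apply/negP; apply/set0Pn; exists c; rewrite inE; by rewrite !inE in cj cj'; rewrite cj cj'.
by case: #|_| => [|[|]] //= _; rewrite ?mul0n ?mul1n.
Qed.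

Lemma ub_nat k : is_kPIR C k -> (k * (2*d).+1 * (t + d) <= m * (t * (2*d).+1 + d^2))%N.
Proof.
move=> hk.
apply: (@leq_trans (\sum_(i < t + d) \sum_c wt d C c i)).
  rewrite -[in X in (_ * X <= _)%N](card_ord (t + d)) mulnC -sum_nat_const.
  by apply: leq_sum => i _; apply: per_i.
rewrite exchange_big /= -[in X in (X * _)%N](card_ord m) -sum_nat_const.
apply: leq_sum => c _; exact: col_weight.
Qed.
End UB3.
Section Reals.
Variable R : realType.

Lemma Qn (n : nat) : n%:Q = n%:R.
Proof. by []. Qed.

Lemma Qnat_eq (a b : nat) : a%:Q = b%:Q -> a = b.
Proof. by move/eqP; rewrite eqr_nat => /eqP. Qed.

Lemma ratr_Qnat (n : nat) : ratr n%:Q = n%:R :> R.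
Proof. by rewrite ratr_int. Qed.

Lemma p_of_s (t d p : nat) : (0 < t)%N -> p%:Q = (1 + d%:Q / t%:Q) * t%:Q -> p = (t + d)%N.
Proof.
move=> t0 e; apply: Qnat_eq; rewrite e !Qn natrD mulrDl mul1r divfK //.
by rewrite pnatr_eq0 -lt0n.
Qed.

End Reals.
Section Reals2.
Variable R : realType.

Lemma frac_le (k m N D : nat) : (0 < m)%N -> (0 < D)%N -> (k * D <= N * m)%N ->
  k%:R / m%:R <= N%:R / D%:R :> R.
Proof.
move=> m0 D0 h.
rewrite ler_pdivrMr ?ltr0n // mulrAC ler_pdivlMr ?ltr0n // -!natrM ler_nat.
move: h; rewrite [(k * D)%N]mulnC [(N * m)%N]mulnC //.
Qed.

Lemma frac_eq (k m N D : nat) : (0 < m)%N -> (0 < D)%N -> (k * D = N * m)%N ->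
  k%:R / m%:R = N%:R / D%:R :> R.
Proof.
move=> m0 D0 h; apply/eqP; rewrite eqr_div; last 2 first.
- by rewrite pnatr_eq0 -lt0n.
- by rewrite pnatr_eq0 -lt0n.
by rewrite -!natrM h mulnC.
Qed.

Lemma vE (t d : nat) : (0 < d)%N ->
  1 - (d%:R ^+ 2 + d%:R) / ((t%:R + d%:R) * (2 * d%:R + 1)) =
  (t * (2*d).+1 + d^2)%N%:R / ((2*d).+1 * (t + d))%N%:R :> R.
Proof.
move=> d0.
have h1 : (t%:R + d%:R : R) != 0 by rewrite -natrD pnatr_eq0 -lt0n; lia.
have h2 : (2 * d%:R + 1 : R) != 0.
  by rewrite (_ : 2 * d%:R + 1 = (2 * d).+1%:R) ?pnatr_eq0 // -(natr1 (2 * d)) natrM.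
rewrite !(natrD, natrM, natrX) -(natr1 (2 * d)) natrM /=.
by field; rewrite h1 h2.
Qed.

End Reals2.
Local Open Scope classical_set_scope.

Lemma part_i (R : realType) (t d : nat) : (1 <= d)%N -> (d <= t)%N ->
     let s : rat := 1 + d%:Q / t%:Q in
     let v : R := 1 - (d%:R ^+ 2 + d%:R) / ((t%:R + d%:R) * (2 * d%:R + 1)) in
     [/\ rates_st R s t v,
         (forall r, rates_st R s t r -> r <= v),
         g_st R s t = v,
         v = t%:R / (t%:R + d%:R) + d%:R ^+ 2 / ((t%:R + d%:R) * (2 * d%:R + 1))
       & v = (ratr s + 1 + 1 / d%:R) / ((2 + 1 / d%:R) * ratr s)].
Proof.
move=> d1 dt s v.
have t0 : (0 < t)%N by lia.
have D0 : (0 < (2*d).+1 * (t + d))%N by rewrite muln_gt0; lia.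
have hv : v = (t * (2*d).+1 + d^2)%N%:R / ((2*d).+1 * (t + d))%N%:R by rewrite /v vE.
have mem : rates_st R s t v.
  exists (t + d)%N; split.
    rewrite /s Qn natrD mulrDl mul1r !Qn divfK //.
    by rewrite pnatr_eq0 -lt0n.
  have [m [k [C [m0 hk e]]]] := construct d1 dt.
  exists ('F_2 : finFieldType), m, k, C; split; [exact: m0 | split; [exact: hk |]].
  rewrite hv; symmetry; apply: frac_eq => //.
  by rewrite mulnA e mulnC.
have ub : forall r, rates_st R s t r -> r <= v.
  move=> r [p [hp [F [m [k [C [m0 [hk ->]]]]]]]].
  have ep : p = (t + d)%N by exact: (p_of_s t0 hp).
  subst p; rewrite hv; apply: frac_le => //.
  by have := ub_nat hk; rewrite mulnA [X in (_ <= X)%N]mulnC.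
have tR : 0 < t%:R :> R by rewrite ltr0n.
have dR : 0 < d%:R :> R by rewrite ltr0n.
split => //.
- rewrite /g_st; apply/eqP; rewrite eq_le; apply/andP; split.
    apply: ge_sup; first by exists v.
    by move=> r hr; apply: ub.
  apply: ub_le_sup => //; by exists v => r hr; apply: ub.
- rewrite /v; field; lra.
- have es : ratr s = 1 + d%:R / t%:R :> R.
    rewrite /s rmorphD rmorph1 fmorph_div; congr (1 + _ / _); exact: ratr_Qnat.
  rewrite es /v; field; lra.
Qed.
Section Part2.
Variable R : realType.
Variable s : rat.
Hypotheses (s1 : 1 < s) (s2 : s <= 2).

Lemma valid_g (t p : nat) : (0 < t)%N -> p%:Q = s * t%:Q ->
  exists d, [/\ (1 <= d)%N, (d <= t)%N, p = (t + d)%N &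
     g_st R s t = (ratr s + 1 + 1 / d%:R) / ((2 + 1 / d%:R) * ratr s)].
Proof.
move=> t0 hp.
have tQ : 0 < t%:Q by rewrite Qn ltr0n.
have tp : (t < p)%N.
  rewrite -(ltr_nat rat) -!Qn hp -[X in X < _]mul1r ltr_pM2r //.
have pt : (p <= 2 * t)%N.
  by rewrite -(ler_nat rat) -Qn hp !Qn natrM ler_pM2r ?ltr0n.
exists (p - t)%N; split; try lia.
have es : s = 1 + (p - t)%N%:Q / t%:Q.
  apply: (mulIf (lt0r_neq0 tQ)); rewrite -hp mulrDl mul1r divfK ?lt0r_neq0 //.
  by rewrite !Qn -natrD subnKC // ltnW.
have d1 : (1 <= p - t)%N by lia.
have dt' : (p - t <= t)%N by lia.
have [_ _ h3 _ h5] := part_i R d1 dt'.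
by rewrite es h3.
Qed.
End Part2.
Section Small.
Variable R : realType.
Lemma small (S e x : R) : 1 < S -> 0 < e -> 1 < e * x -> 0 < x ->
  (S - 1) / (2 * S * (2 * x + 1)) < e.
Proof.
move=> S1 e0 ex x0.
have h : 0 < (e * x - 1) * S by apply: mulr_gt0; lra.
have h2 : 0 < e * S by apply: mulr_gt0; lra.
rewrite ltr_pdivrMr; last by apply: mulr_gt0; [apply: mulr_gt0|]; lra.
nra.
Qed.
End Small.
Section Part3.
Variable R : realType.
Variable s : rat.
Hypotheses (s1 : 1 < s) (s2 : s <= 2).
Local Open Scope classical_set_scope.

Let S : R := ratr s.
Let L : R := (S + 1) / (2 * S).

Lemma S1 : 1 < S.
Proof. by rewrite /S -(rmorph1 (ratr : rat -> R)) ltr_rat. Qed.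

Lemma f_id (d : nat) : (0 < d)%N ->
  (S + 1 + 1 / d%:R) / ((2 + 1 / d%:R) * S) = L - (S - 1) / (2 * S * (2 * d%:R + 1)).
Proof.
move=> d0; have := S1 => h; have dR : 0 < d%:R :> R by rewrite ltr0n.
rewrite /L; field; lra.
Qed.

Definition EE N := [set v : R | exists t : nat, [/\ (N <= t)%N, (0 < t)%N,
   (exists p : nat, p%:Q = s * t%:Q) & v = g_st R s t]].

Lemma EE_ub N v : EE N v -> v <= L.
Proof.
move=> [t [_ t0 [p hp] ->]].
have [d [d1 _ _ ->]] := valid_g R s1 s2 t0 hp.
rewrite -/S f_id // lerBlDr lerDl.
have := S1 => h; have dR : 0 < d%:R :> R by rewrite ltr0n.
apply: divr_ge0; first lra.
apply: mulr_ge0; [apply: mulr_ge0|]; lra.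
Qed.

Lemma num_den : exists num den : nat, [/\ (0 < den)%N & num%:Q = s * den%:Q].
Proof.
have n0 : (0 <= numq s)%R by rewrite numq_ge0; apply: ltW; apply: lt_trans s1.
exists `|numq s|%N, `|denq s|%N; split.
  by rewrite absz_gt0 denq_neq0.
rewrite gez0_abs // absz_denq.
have dz : ((denq s)%:~R : rat) != 0 by rewrite intr_eq0 denq_neq0.
by rewrite -{2}(divq_num_den s) divfK.
Qed.

Lemma approx N (e : R) : 0 < e -> exists v, EE N v /\ L - e < v.
Proof.
move=> e0.
have [num [den [den0 hnd]]] := num_den.
have [d' [d'1 _ ed' _]] := valid_g R s1 s2 den0 hnd.
have e1 : 0 <= 1 / e by rewrite divr_ge0 // ltW.
have hn0 := archi_boundP e1.
set n0 := Num.Def.archi_bound (1 / e) in hn0.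
set n := (N + n0).+1.
have pv : (n * num)%:Q = s * (n * den)%:Q.
  by rewrite !Qn !natrM -!Qn hnd mulrCA.
have t0 : (0 < n * den)%N by rewrite muln_gt0 den0.
have [d [d1 _ ep hg]] := valid_g R s1 s2 t0 pv.
exists (g_st R s (n * den)); split.
  exists (n * den)%N; split => //; last by exists (n * num)%N.
  by rewrite /n; nia.
have dn : (n <= d)%N by nia.
have dR : 0 < d%:R :> R by rewrite ltr0n.
have hd : 1 / e < d%:R.
  apply: lt_le_trans hn0 _; rewrite ler_nat; apply: leq_trans dn; rewrite /n; lia.
have hed : 1 < e * d%:R.
  have : 0 < e * (d%:R - 1 / e) by apply: mulr_gt0 => //; rewrite subr_gt0.
  by rewrite mulrBr div1r mulfV ?gt_eqF // subr_gt0.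
rewrite hg f_id //.
have := small (S1) e0 hed dR.
move=> h; lra.
Qed.

Lemma EE_sup N : sup (EE N) = L.
Proof.
have ne : EE N !=set0 by have [v [Ev _]] := approx N ltr01; exists v.
have hub : has_ubound (EE N) by exists L => v; apply: EE_ub.
apply/eqP; rewrite eq_le; apply/andP; split.
  by apply: ge_sup => // v; apply: EE_ub.
rewrite leNgt; apply/negP => hlt.
have hpos : 0 < L - sup (EE N) by rewrite subr_gt0.
have [v [Ev hv]] := approx N hpos.
have := ub_le_sup hub Ev; lra.
Qed.
End Part3.
Local Open Scope classical_set_scope.

Theorem corollary3 (R : realType) :
  (* (i) *)
  (forall t d : nat, (1 <= d)%N -> (d <= t)%N ->
     let s : rat := 1 + d%:Q / t%:Q in
     let v : R := 1 - (d%:R ^+ 2 + d%:R) / ((t%:R + d%:R) * (2 * d%:R + 1)) in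
     [/\ rates_st R s t v,
         (forall r, rates_st R s t r -> r <= v),
         g_st R s t = v,
         v = t%:R / (t%:R + d%:R) + d%:R ^+ 2 / ((t%:R + d%:R) * (2 * d%:R + 1))
       & v = (ratr s + 1 + 1 / d%:R) / ((2 + 1 / d%:R) * ratr s)]) /\
  (* (ii) *)
  (forall s : rat, 1 < s -> s <= 2 ->
     g_s R s = (ratr s + 1) / (2 * ratr s)) /\
  (* (iii) *)
  (forall t : nat, (0 < t)%N ->
     let v : R := (3 * t%:R + 1) / (4 * t%:R + 2) in
     [/\ rates_st R 2 t v, (forall r, rates_st R 2 t r -> r <= v) & g_st R 2 t = v]).
Proof.
split; first by move=> t d; exact: part_i.
split.
  move=> s s1 s2; rewrite /g_s.
  have -> : [set u | exists N : nat, u = sup [set v | exists t : nat,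
                   [/\ (N <= t)%N, (0 < t)%N,
                       (exists p : nat, p%:Q = s * t%:Q) & v = g_st R s t]]]
            = [set (ratr s + 1) / (2 * ratr s)].
    apply/seteqP; split => u /=.
      by move=> [N ->]; exact: (EE_sup R s1 s2 N).
    by move=> ->; exists 0%N; rewrite (EE_sup R s1 s2 0).
  exact: inf1.
move=> t t0 v.
have [h1 h2 h3 _ _] := part_i R t0 (leqnn t).
have e2 : (1 + t%:Q / t%:Q : rat) = 2.
  by rewrite divff // Qn pnatr_eq0 -lt0n.
have ev : v = 1 - (t%:R ^+ 2 + t%:R) / ((t%:R + t%:R) * (2 * t%:R + 1)).
  have tR : 0 < t%:R :> R by rewrite ltr0n.
  rewrite /v; field; lra.
rewrite e2 -ev in h1 h2 h3.
by split.
Qed.
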